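(* The map sending a smooth extremal assignment $Z$ of order $n$ to the hypergraph on vertex set $[n]$ with edge set $\{[n]\setminus B: B \text{ a maximal element of } \mathcal{C}_Z\}$ is a bijection from the set of smooth extremal assignments of order $n$ onto the set of simple intersecting families of order $n$, rank $\le n-2$ and antirank $\ge 2$. Here $\mathcal{C}_Z=\{\ell(v): G\in S_2(n),\ v\in Z(G)\}$.
   Context: $[n]=\{1,\dots,n\}$. A stable $n$-labeled tree is a finite tree with $n$ leaves labeled bijectively by $[n]$, all internal vertices of degree $\ge 3$; $V(G)$ its internal vertices; $S(n)$ the set of such trees up to label-preserving isomorphism and $S_2(n)$ those with exactly 2 internal vertices. $\ell(v)$ is the set of labels of leaves adjacent to $v$. $G\rightsquigarrow G'$: $G'$ obtained by collapsing connected sets of internal vertices, inducing surjection $\pi:V(G)\to V(G')$; $v\rightsquigarrow v'$ means $\pi(v)=v'$. An extremal assignment of order $n$: rule $Z(G)\subset V(G)$ for $G\in S(n)$ with (a) $Z(G)\ne V(G)$, (b) if $G\rightsquigarrow G'$ and $\pi^{-1}(v')=\{v_1,\dots,v_k\}$ then $v'\in Z(G')\iff v_1,\dots,v_k\in Z(G)$. $Z$ is smooth if for every $G$ and $v\in Z(G)$ there exist $G'\in S_2(n)$, $v'\in Z(G')$ with $G\rightsquigarrow G'$, $v\rightsquigarrow v'$. A simple intersecting family of order $n$, rank $\le n-2$, antirank $\ge2$ is a collection $\{A_i\}$ of subsets of $[n]$ with $2\le|A_i|\le n-2$ for all $i$, $A_i\subset A_j\Rightarrow i=j$, and $A_i\cap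 A_j\ne\emptyset$ for all $i,j$. *)

(* Defs.v *)
From mathcomp Require Import all_boot.
Set Implicit Arguments. Unset Strict Implicit. Unset Printing Implicit Defensive.

(* A stable n-labeled tree, given concretely: internal vertices are 'I_nv,
   sadj is the adjacency between internal vertices, leaf i (labelled i) is
   adjacent to the internal vertex sleaf i.  The whole graph is a tree:
   the internal graph is connected and every internal edge is a bridge
   (removing it disconnects its endpoints); leaves are pendant. *)
Record stree (n : nat) := STree {
  nv : nat;
  sadj : rel 'I_nv;
  sleaf : 'I_n -> 'I_nv;
  sadj_sym : symmetric sadj;
  sadj_irr : irreflexive sadj;
  sconn : forall x y : 'I_nv, connect sadj x y;
  sbridge : forall x y : 'I_nv, sadj x y ->
     ~~ connect (fun a b => [&& sadj a b, (a, b) != (x, y) & (a, b) != (y, x)]) x y;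
  sdeg : forall v : 'I_nv, 3 <= #|[set w | sadj v w]| + #|[set i | sleaf i == v]|
}.

Definition ell n (G : stree n) (v : 'I_(nv G)) : {set 'I_n} :=
  [set i | @sleaf n G i == v].

(* G ~> G' via pi : V(G) -> V(G') obtained by collapsing the (connected)
   fibres of pi. *)
Definition contracts n (G G' : stree n) (pi : 'I_(nv G) -> 'I_(nv G')) : Prop :=
  [/\ (forall v' : 'I_(nv G'), exists v, pi v = v'),
      (forall i, @sleaf n G' i = pi (@sleaf n G i)),
      (forall (v' : 'I_(nv G')) (x y : 'I_(nv G)), pi x = v' -> pi y = v' ->
          connect (fun a b => [&& @sadj n G a b, pi a == v' & pi b == v']) x y) &
      (forall a b : 'I_(nv G'), @sadj n G' a b <->
          (a != b /\ exists x y, [/\ @sadj n G x y, pi x = a & pi y = b]))].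

Definition assignment n := forall G : stree n, {set 'I_(nv G)}.

Definition extremal n (Z : assignment n) : Prop :=
  (forall G : stree n, Z G != [set: 'I_(nv G)]) /\
  (forall (G G' : stree n) (pi : 'I_(nv G) -> 'I_(nv G')), contracts pi ->
     forall v' : 'I_(nv G'), v' \in Z G' <-> (forall v, pi v = v' -> v \in Z G)).

Definition smooth n (Z : assignment n) : Prop :=
  forall (G : stree n) (v : 'I_(nv G)), v \in Z G ->
    exists (G' : stree n) (pi : 'I_(nv G) -> 'I_(nv G')),
      [/\ nv G' = 2, contracts pi & pi v \in Z G'].

Definition inCZ n (Z : assignment n) (A : {set 'I_n}) : Prop :=
  exists G : stree n, nv G = 2 /\ exists v, v \in Z G /\ A = ell v.

Definition maxCZ n (Z : assignment n) (B : {set 'I_n}) : Prop :=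
  inCZ Z B /\ (forall C, inCZ Z C -> B \subset C -> C = B).

Definition hyp n (Z : assignment n) (A : {set 'I_n}) : Prop :=
  exists B, maxCZ Z B /\ A = ~: B.

Definition simple_intersecting n (F : {set {set 'I_n}}) : Prop :=
  [/\ (forall A, A \in F -> 2 <= #|A| <= n - 2),
      (forall A B, A \in F -> B \in F -> A \subset B -> A = B) &
      (forall A B, A \in F -> B \in F -> A :&: B != set0)].

(* Main.v *)
Require Import Defs.
From mathcomp Require Import all_boot.
From Stdlib Require Import Classical ClassicalEpsilon Lia.
From mathcomp Require Import zify.
Set Implicit Arguments. Unset Strict Implicit. Unset Printing Implicit Defensive.

Section Gen.
Variable T : finType.
Implicit Types (e : rel T).

Lemma connect_inv e (P : pred T) a b :
  (forall x y, e x y -> P x -> P y) -> connect e a b -> P a -> P b.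
Proof.
move=> H /connectP [p pth ->]; elim: p a pth => [|c p IH] a //= /andP [eac pth] Pa.
exact: (IH c pth (H _ _ eac Pa)).
Qed.

Lemma connect_restr e (P : pred T) a b : connect e a b ->
  (forall z, connect e a z -> P z) -> connect [rel x y | [&& e x y, P x & P y]] a b.
Proof.
move=> /connectP [p pth ->]; elim: p a pth => [|c p IH] a /=; first by rewrite connect0.
case/andP=> eac pth H.
apply: (connect_trans (y:=c)).
  by apply: connect1; rewrite /= eac !H ?connect0 // connect1.
apply: IH => // z czz; apply: H; exact: connect_trans (connect1 eac) czz.
Qed.

Lemma connect_subrel e e' a b : subrel e e' -> connect e a b -> connect e' a b.
Proof. move=> H; apply: connect_sub => x y /H; exact: connect1. Qed.

Definition avoidr e (v : T) : rel T := [rel a b | [&& e a b, a != v & b != v]].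

Lemma first_step e adj v w : subrel e adj -> connect e v w -> w != v ->
  exists u, e v u /\ connect (avoidr adj v) u w.
Proof.
move=> sub /connectP [p0 pth0 hw] wv.
set Q := exists u, e v u /\ connect (avoidr adj v) u w.
suff H: forall p a, path e a p -> last a p = w ->
  (a = v -> Q) /\ (a != v -> connect (avoidr adj v) a w \/ Q).
  by apply: (H p0 v pth0 (esym hw)).1.
elim=> [|b q IH] a /=.
  by move=> _ ->; split=> [wv'|_]; [rewrite wv' eqxx in wv | left; exact: connect0].
case/andP=> eab pth hl; have [IH1 IH2] := IH b pth hl.
split.
  move=> av; subst a; case: (eqVneq b v) => [bv|bv]; first exact: IH1.
  case: (IH2 bv) => [h|h] //; by exists b.
move=> av; case: (eqVneq b v) => [bv|bv]; first by right; exact: IH1.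
case: (IH2 bv) => [h|h]; last by right.
left; apply: connect_trans h; apply: connect1; by rewrite /avoidr /= (sub _ _ eab) av bv.
Qed.
End Gen.

Lemma connect_proj (T T' : finType) (f : T -> T') (e : rel T) (e' : rel T') a b :
  (forall p q, e p q -> f p = f q \/ e' (f p) (f q)) -> connect e a b -> connect e' (f a) (f b).
Proof.
move=> H /connectP [p pth ->]; elim: p a pth => [|c p IH] a /=; first by rewrite connect0.
case/andP=> eac pth; apply: connect_trans (IH _ pth).
by case: (H _ _ eac) => [->|h]; [exact: connect0 | exact: connect1].
Qed.

Definition comp n (G : stree n) (v x : 'I_(nv G)) : {set 'I_(nv G)} :=
  [set z | connect (avoidr (@sadj n G) v) x z].

Definition sep n (G : stree n) (v : 'I_(nv G)) (A : {set 'I_n}) : bool :=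
  [forall i in A, @sleaf n G i != v] &&
  [forall i in A, forall j in A, connect (avoidr (@sadj n G) v) (@sleaf n G i) (@sleaf n G j)].

Section Tree.
Variable n : nat.
Variable G : stree n.
Local Notation V := ('I_(nv G)).
Local Notation adj := (@sadj n G).
Local Notation lf := (@sleaf n G).
Local Notation av := (avoidr adj).

Lemma adj_sym (a b : V) : adj a b = adj b a.
Proof. exact: (@sadj_sym n G). Qed.

Lemma adj_irr (a : V) : adj a a = false.
Proof. exact: (@sadj_irr n G). Qed.

Lemma adj_neq (a b : V) : adj a b -> a != b.
Proof. by apply: contraTneq => ->; rewrite adj_irr. Qed.

Lemma av_sym (v : V) : symmetric (av v).
Proof. by move=> a b; rewrite /avoidr /= adj_sym; case: (a != v); case: (b != v); rewrite ?andbF ?andbT. Qed.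

Lemma csym (v a b : V) : connect (av v) a b = connect (av v) b a.
Proof. exact: (sym_connect_sym (av_sym v)). Qed.

Lemma from_v (v z : V) : connect (av v) v z -> z = v.
Proof.
move/connectP=> [[|c p] /= pth ->] //.
by move: pth; rewrite /avoidr /= eqxx andbF.
Qed.

Lemma to_v (v z : V) : connect (av v) z v -> z = v.
Proof. by rewrite csym => /from_v. Qed.

Lemma comp_eq (v a b : V) : connect (av v) a b -> comp v a = comp v b.
Proof.
move=> h; apply/setP=> z; rewrite !inE; apply/idP/idP => hz.
  by rewrite csym in h; exact: connect_trans h hz.
exact: connect_trans h hz.
Qed.

Lemma in_comp (v x : V) : x \in comp v x.
Proof. by rewrite inE connect0. Qed.

Lemma T1 (u v z : V) : adj u v -> z \in comp v u -> z \in comp u v -> False.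
Proof.
move=> huv; rewrite !inE => h1 h2.
have := @sbridge n G u v huv; move/negP; apply.
apply: (connect_trans (y := z)).
  apply: connect_subrel h1 => a b /and3P [hab hav hbv].
  by rewrite /= hab !xpair_eqE !negb_and hbv hav !orbT.
rewrite csym in h2; apply: connect_subrel h2 => a b /and3P [hab hau hbu].
by rewrite /= hab !xpair_eqE !negb_and hbu hau !orbT.
Qed.

Lemma T2 (u x v : V) : adj u x -> u != v -> v \notin comp u x -> comp u x \subset comp v u.
Proof.
move=> hux huv hv; apply/subsetP=> z; rewrite !inE => hz.
have hxv : x != v by apply: contraNneq hv => <-; exact: in_comp.
apply: (connect_trans (y:=x)); first by apply: connect1; rewrite /avoidr /= hux huv hxv.
have := connect_restr (P := fun w => w != v) hz.
have H : forall w, connect (av u) x w -> w != v.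
  by move=> w hw; apply: contraNneq hv => <-; rewrite inE.
move/(_ H); apply: connect_subrel => a b /and3P [/and3P [hab _ _] ha hb].
by rewrite /avoidr /= hab ha hb.
Qed.

Lemma nbr (v z : V) : z != v -> exists u, adj v u /\ z \in comp v u.
Proof.
move=> hz.
have [u [h1 h2]] := first_step (e:=adj) (adj:=adj) (v:=v) (w:=z) (fun a b h => h) (@sconn n G v z) hz.
by exists u; rewrite inE.
Qed.

Lemma B2 (v x y : V) : adj v x -> adj v y -> y != x -> x \notin comp v y.
Proof.
move=> hvx hvy hyx; apply/negP; rewrite inE => h.
have hxv : adj x v by rewrite adj_sym.
have := @sbridge n G x v hxv; move/negP; apply.
apply: (connect_trans (y := y)).
  rewrite csym in h; apply: connect_subrel h => a b /and3P [hab hav hbv].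
  by rewrite /= hab !xpair_eqE !negb_and hbv hav !orbT.
apply: connect1.
have hyv : y != v by rewrite eq_sym adj_neq.
by rewrite /= adj_sym hvy !xpair_eqE !negb_and hyx hyv ?orbT.
Qed.

Lemma LV (v x : V) : adj v x -> 2 <= #|[set i | lf i \in comp x v]|.
Proof.
suff H : forall k (v x : V), #|comp x v| <= k -> adj v x -> 2 <= #|[set i | lf i \in comp x v]|.
  by move=> hvx; apply: (H _ v x (leqnn _) hvx).
elim=> [|k IH] {}v {}x hk hvx.
  by move: hk; rewrite leqn0 cards_eq0 => /eqP h; move: (in_comp x v); rewrite h inE.
have hvin : v \in comp x v by rewrite inE connect0.
case: (leqP 2 #|[set i | lf i == v]|) => hl.
  apply: (leq_trans hl); apply: subset_leq_card; apply/subsetP => i; rewrite !inE.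
  by move/eqP => ->.
have deg := @sdeg n G v.
have [y hy] : exists y, adj v y && (y != x).
  apply/existsP; apply: contraLR deg; rewrite negb_exists => /forallP H.
  rewrite -ltnNge.
  have : #|[set w | adj v w]| <= 1.
    rewrite -(cards1 x); apply: subset_leq_card; apply/subsetP => w; rewrite !inE.
    by move=> hw; move: (H w); rewrite hw /= negbK.
  rewrite ltnS in hl; move=> h1.
  by apply: (leq_ltn_trans (leq_add h1 hl)).
case/andP: hy => hvy hyx.
have hxn := B2 hvx hvy hyx.
have hvx' : v != x by apply: adj_neq.
have sub := T2 hvy hvx' hxn.
have hprop : comp v y \proper comp x v.
  apply/properP; split => //; exists v => //.
  by apply/negP; rewrite inE => /to_v hyv; rewrite hyv adj_irr in hvy.
have hlt := proper_card hprop.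
have hyv : adj y v by rewrite adj_sym.
have := IH y v _ hyv; rewrite -ltnS; move/(_ (leq_trans hlt hk)) => h2.
apply: (leq_trans h2); apply: subset_leq_card; apply/subsetP => i; rewrite !inE.
by move=> hi; have := subsetP sub (lf i); rewrite !inE; apply.
Qed.

End Tree.

Section Core.
Variable n : nat.
Variable G : stree n.
Local Notation V := ('I_(nv G)).
Local Notation adj := (@sadj n G).
Local Notation lf := (@sleaf n G).
Local Notation av := (avoidr adj).

Lemma sepP (v : V) (A : {set 'I_n}) : sep v A ->
  (forall i, i \in A -> lf i != v) /\
  (forall i j, i \in A -> j \in A -> connect (av v) (lf i) (lf j)).
Proof.
case/andP => /forallP h1 /forallP h2; split.
  by move=> i hi; move: (h1 i); rewrite hi.
by move=> i j hi hj; move: (h2 i); rewrite hi => /forallP /(_ j); rewrite hj.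
Qed.

Lemma sepI (v : V) (A : {set 'I_n}) :
  (forall i, i \in A -> lf i != v) ->
  (forall i j, i \in A -> j \in A -> connect (av v) (lf i) (lf j)) -> sep v A.
Proof.
move=> h1 h2; apply/andP; split; apply/forallP => i; apply/implyP => hi.
  exact: h1.
by apply/forallP => j; apply/implyP => hj; apply: h2.
Qed.

Variable F : {set {set 'I_n}}.
Hypothesis hF : forall A B, A \in F -> B \in F -> A :&: B != set0.

Lemma Fne (A : {set 'I_n}) : A \in F -> exists i, i \in A.
Proof. by move=> hA; have := hF hA hA; rewrite setIid => /set0Pn. Qed.

Lemma core (T : pred V) :
  (forall a b, T a -> T b -> connect [rel x y | [&& adj x y, T x & T y]] a b) ->
  (forall v, T v -> exists2 A, A \in F & sep v A) ->
  forall v0, T v0 ->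
  exists v A, [/\ T v, A \in F, sep v A &
     forall i z, i \in A -> z \in comp v (lf i) -> ~~ T z].
Proof.
move=> tconn HZ v0 hv0.
have [A0 hA0 hs0] := HZ v0 hv0.
have [i0 hi0] := Fne hA0.
suff H : forall k (v : V) (A : {set 'I_n}) i, #|comp v (lf i)| <= k -> T v -> A \in F -> sep v A -> i \in A ->
  exists v A, [/\ T v, A \in F, sep v A &
     forall i z, i \in A -> z \in comp v (lf i) -> ~~ T z].
  exact: (H _ v0 A0 i0 (leqnn _) hv0 hA0 hs0 hi0).
elim=> [|k IH] v A i hk hv hA hs hi.
  by move: hk; rewrite leqn0 cards_eq0 => /eqP h; move: (in_comp v (lf i)); rewrite h inE.
case: (classic (forall j z, j \in A -> z \in comp v (lf j) -> ~~ T z)) => [Hd|Hd].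
  by exists v, A.
have [j [z [hj hz hTz]]] : exists j z, [/\ j \in A, z \in comp v (lf j) & T z].
  apply: NNPP => HH; apply: Hd => j z hj hz; apply/negP => hTz; apply: HH.
  by exists j, z.
have [hs1 hs2] := sepP hs.
have ceq : comp v (lf j) = comp v (lf i) by apply: comp_eq; apply: hs2.
rewrite ceq in hz.
have hzv : z != v.
  apply/eqP => hzv; subst z; move: hz; rewrite inE => /to_v.
  by move/eqP; rewrite (negbTE (hs1 i hi)).
have subT : subrel [rel x y | [&& adj x y, T x & T y]] adj by move=> a b /and3P [].
have [u [/and3P [huv _ hTu] hcu]] := first_step subT (tconn v z hv hTz) hzv.
have huin : u \in comp v (lf i).
  by move: hz; rewrite !inE => hz; apply: connect_trans hz _; rewrite csym.
have ceq2 : comp v (lf i) = comp v u by apply: comp_eq; move: huin; rewrite inE.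
have [A' hA' hs'] := HZ u hTu.
have [i' hi'] := Fne hA'.
have [hs1' hs2'] := sepP hs'.
have [x [hux hxin]] := nbr (hs1' i' hi').
have ceq3 : comp u x = comp u (lf i') by apply: comp_eq; move: hxin; rewrite inE.
have hvu : adj u v by rewrite adj_sym.
have hvn : v \notin comp u x.
  apply/negP => hvin.
  have ceq4 : comp u x = comp u v by apply: comp_eq; move: hvin; rewrite inE.
  have [k0 hk0] := Fne hA.
  have /set0Pn [m] := hF hA hA'; rewrite inE => /andP [hmA hmA'].
  apply: (T1 (z := lf m) hvu).
    rewrite -ceq2 -(comp_eq (hs2 m i hmA hi)); exact: in_comp.
  rewrite -ceq4 ceq3 -(comp_eq (hs2' m i' hmA' hi')); exact: in_comp.
have huv' : u != v by apply: adj_neq.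
have sub := T2 hux huv' hvn.
have hprop : comp u x \proper comp v u.
  apply/properP; split => //; exists u; first exact: in_comp.
  by apply/negP; rewrite inE => /to_v hxu; rewrite hxu adj_irr in hux.
have hlt := proper_card hprop.
apply: (IH u A' i') => //.
by rewrite -ceq3 -ltnS; apply: leq_trans hlt _; rewrite -ceq2.
Qed.
End Core.

Definition t0 : 'I_2 := ord0.
Definition t1 : 'I_2 := ord_max.

Lemma I2_cases (a : 'I_2) : a = t0 \/ a = t1.
Proof. by case: a => [[|[|m]] h]; [left|right|]; try apply: val_inj. Qed.

Lemma t01 : (t0 == t1) = false. Proof. by []. Qed.
Lemma t10 : (t1 == t0) = false. Proof. by []. Qed.

Definition adj2 : rel 'I_2 := [rel a b | a != b].

Lemma adj2_sym : symmetric adj2. Proof. by move=> a b; rewrite /adj2 /= eq_sym. Qed.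
Lemma adj2_irr : irreflexive adj2. Proof. by move=> a; rewrite /adj2 /= eqxx. Qed.
Lemma adj2_conn : forall x y : 'I_2, connect adj2 x y.
Proof. by move=> x y; case: (eqVneq x y) => [->|h]; [exact: connect0 | exact: connect1]. Qed.

Lemma adj2_bridge : forall x y : 'I_2, adj2 x y ->
   ~~ connect (fun a b => [&& adj2 a b, (a, b) != (x, y) & (a, b) != (y, x)]) x y.
Proof.
move=> x y hxy; apply/negP => hc.
have H : forall a b, [&& adj2 a b, (a, b) != (x, y) & (a, b) != (y, x)] -> False.
  move=> a b; move: hxy; rewrite /adj2 /= !xpair_eqE.
  by case: (I2_cases a) => ->; case: (I2_cases b) => ->; case: (I2_cases x) => ->;
    case: (I2_cases y) => ->.
have := connect_inv (P := pred1 x) (fun a b h _ => False_ind _ (H a b h)) hc (eqxx x).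
by move=> /eqP h; move: hxy; rewrite /adj2 /= h eqxx.
Qed.

Section MkT2.
Variable n : nat.
Variable B : {set 'I_n}.
Hypothesis h1 : 2 <= #|B|.
Hypothesis h2 : 2 <= #|~: B|.

Definition lf2 (i : 'I_n) : 'I_2 := if i \in B then t0 else t1.

Lemma nbrs2 (v : 'I_2) : #|[set w | adj2 v w]| = 1.
Proof.
have -> : [set w | adj2 v w] = [set~ v] by apply/setP=> w; rewrite !inE eq_sym.
by rewrite cardsC1 card_ord.
Qed.

Lemma ell2_0 : [set i | lf2 i == t0] = B.
Proof. by apply/setP => i; rewrite !inE /lf2; case: (i \in B); rewrite ?eqxx. Qed.
Lemma ell2_1 : [set i | lf2 i == t1] = ~: B.
Proof. by apply/setP => i; rewrite !inE /lf2; case: (i \in B); rewrite ?eqxx. Qed.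

Lemma deg2 : forall v : 'I_2, 3 <= #|[set w | adj2 v w]| + #|[set i | lf2 i == v]|.
Proof.
move=> v; rewrite nbrs2 add1n ltnS.
by case: (I2_cases v) => ->; rewrite ?ell2_0 ?ell2_1.
Qed.

Definition mkT2 : stree n :=
  @STree n 2 adj2 lf2 adj2_sym adj2_irr adj2_conn adj2_bridge deg2.
End MkT2.

Section Contr.
Variable n : nat.
Variables G G' : stree n.
Variable pi : 'I_(nv G) -> 'I_(nv G').
Hypothesis hc : contracts pi.
Local Notation adj := (@sadj n G).
Local Notation adj' := (@sadj n G').
Local Notation lf := (@sleaf n G).
Local Notation lf' := (@sleaf n G').

Lemma lift (v' : 'I_(nv G')) a b : connect (avoidr adj' v') a b -> a != v' ->
  forall x y, pi x = a -> pi y = b ->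
  connect [rel p q | [&& adj p q, pi p != v' & pi q != v']] x y.
Proof.
case: hc => hsurj hleaf hfib hadj.
move/connectP => [p pth ->]; elim: p a pth => [|c p IH] a /=.
  move=> _ hav x y hx hy; have := hfib a x y hx hy.
  by apply: connect_subrel => s t /and3P [hst /eqP hs /eqP ht]; rewrite /= hst hs ht hav.
case/andP => /and3P [hac hav' hcv] pth hav x y hx hy.
have [_ [x0 [y0 [h0 hx0 hy0]]]] := (hadj a c).1 hac.
apply: (connect_trans (y := x0)).
  have := hfib a x x0 hx hx0.
  by apply: connect_subrel => s t /and3P [hst /eqP hs /eqP ht]; rewrite /= hst hs ht hav.
apply: (connect_trans (y := y0)).
  by apply: connect1; rewrite /= h0 hx0 hy0 hav hcv.
exact: IH pth hcv y0 y hy0 hy.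
Qed.

Lemma proj_conn (v' : 'I_(nv G')) x y :
  connect [rel p q | [&& adj p q, pi p != v' & pi q != v']] x y ->
  connect (avoidr adj' v') (pi x) (pi y).
Proof.
case: hc => hsurj hleaf hfib hadj.
apply: connect_proj => p q /and3P [hpq hp hq].
case: (eqVneq (pi p) (pi q)) => [e|ne]; [by left | right].
rewrite /avoidr /= hp hq !andbT; apply/(hadj _ _).2; split => //.
by exists p, q.
Qed.
End Contr.

Definition ZF n (F : {set {set 'I_n}}) : assignment n :=
  fun G => [set v | [exists A in F, sep v A]].

Lemma ZFP n F (G : stree n) (v : 'I_(nv G)) :
  v \in ZF F G <-> exists2 A, A \in F & sep v A.
Proof.
rewrite inE; split.
  by case/existsP => A /andP [h1 h2]; exists A.
by case=> A h1 h2; apply/existsP; exists A; rewrite h1.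
Qed.

Lemma ZF_ext n (F : {set {set 'I_n}}) : 0 < n ->
  (forall A B, A \in F -> B \in F -> A :&: B != set0) -> extremal (ZF F).
Proof.
move=> hn hF; split.
  move=> G; apply/negP => /eqP hall.
  have tc : forall a b : 'I_(nv G), predT a -> predT b ->
      connect [rel x y | [&& sadj x y, predT x & predT y]] a b.
    move=> a b _ _; apply: connect_subrel (@sconn n G a b) => s t h; by rewrite /= h.
  have hz : forall v : 'I_(nv G), predT v -> exists2 A, A \in F & sep v A.
    by move=> v _; apply/(ZFP F v); rewrite hall inE.
  have [v [A [_ hA hs hd]]] := @core n G F hF predT tc hz (@sleaf n G (Ordinal hn)) isT.
  have [i hi] := Fne hF hA.
  by have := hd i _ hi (in_comp v _).
move=> G G' pi hc v'; split.
  case/ZFP => A hA hs v hv; apply/ZFP; exists A => //.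
  have [hs1 hs2] := sepP hs.
  case: (hc) => hsurj hleaf hfib hadj.
  apply: sepI.
    move=> i hi; apply: (contraNneq _ (hs1 i hi)) => h; by rewrite hleaf h hv.
  move=> i j hi hj.
  have := lift hc (hs2 i j hi hj) (hs1 i hi) (esym (hleaf i)) (esym (hleaf j)).
  apply: connect_subrel => p q /and3P [hpq hp hq].
  rewrite /avoidr /= hpq /=; apply/andP; split.
    by apply: (contraNneq _ hp) => ->; rewrite hv.
  by apply: (contraNneq _ hq) => ->; rewrite hv.
move=> H.
case: (hc) => hsurj hleaf hfib hadj.
have [v0 hv0] := hsurj v'.
have [v [A [hT hA hs hd]]] := @core n G F hF [pred z | pi z == v']
   (fun a b (ha : pi a == v') (hb : pi b == v') => hfib v' a b (eqP ha) (eqP hb))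
   (fun v (hv : pi v == v') => (ZFP F v).1 (H v (eqP hv))) v0 (introT eqP hv0).
apply/ZFP; exists A => //.
have [hs1 hs2] := sepP hs.
apply: sepI.
  by move=> i hi; rewrite hleaf; apply: (hd i) => //; exact: in_comp.
move=> i j hi hj; rewrite !hleaf; apply: proj_conn => //.
have := connect_restr (P := fun z => pi z != v') (hs2 i j hi hj).
have P : forall z, connect (avoidr (@sadj n G) v) (@sleaf n G i) z -> pi z != v'.
  by move=> z hz; apply: (hd i) => //; rewrite inE.
move/(_ P); apply: connect_subrel => p q /and3P [/and3P [h _ _] hp hq].
by rewrite /= h hp hq.
Qed.

Lemma ZF_smooth n (F : {set {set 'I_n}}) :
  (forall A, A \in F -> 2 <= #|A|) -> smooth (ZF F).
Proof.
move=> hF2 G v /ZFP [A hA hs].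
have [hs1 hs2] := sepP hs.
have [i hi] : exists i, i \in A.
  by apply/set0Pn; rewrite -card_gt0; apply: leq_trans (hF2 A hA).
have [x [hvx hxin]] := nbr (hs1 i hi).
set S := comp v x.
set B := [set j | @sleaf n G j \in S].
have ceq : comp v (@sleaf n G i) = S by apply: esym; apply: comp_eq; move: hxin; rewrite inE.
have h1 : 2 <= #|B|.
  apply: leq_trans (hF2 A hA) _; apply: subset_leq_card; apply/subsetP => j hj.
  by rewrite inE -ceq inE; apply: hs2.
have hxv : @sadj n G x v by rewrite adj_sym.
have h2 : 2 <= #|~: B|.
  apply: leq_trans (LV hvx) _; apply: subset_leq_card; apply/subsetP => j.
  rewrite !inE => hj; apply/negP => hj'.
  by apply: (T1 (z := @sleaf n G j) hxv); rewrite inE.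
pose pi := fun z : 'I_(nv G) => if z \in S then t0 else t1.
have hvS : v \notin S.
  apply/negP; rewrite inE => /to_v hx; by rewrite hx adj_irr in hvx.
have hxS : x \in S by exact: in_comp.
have piv : pi v = t1 by rewrite /pi (negbTE hvS).
have pix : pi x = t0 by rewrite /pi hxS.
have Ssub : forall a b, @sadj n G a b -> b \in S -> a != v -> a \in S.
  move=> a b hab hb hav; move: (hb); rewrite !inE => hb'.
  apply: connect_trans hb' (connect1 _).
  have hbv : b != v by apply: contraTneq hb => ->.
  by rewrite /avoidr /= adj_sym hab hbv hav.
exists (mkT2 h1 h2), pi; split => //; last first.
  rewrite piv; apply/ZFP; exists A => //; apply: sepI.
    by move=> j hj; rewrite /= /lf2 (_ : j \in B) // inE -ceq inE; apply: hs2.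
  move=> j k hj hk.
  have -> : @sleaf n (mkT2 h1 h2) j = t0 by rewrite /= /lf2 (_ : j \in B) // inE -ceq inE; apply: hs2.
  have -> : @sleaf n (mkT2 h1 h2) k = t0 by rewrite /= /lf2 (_ : k \in B) // inE -ceq inE; apply: hs2.
  exact: connect0.
split.
- move=> v'; case: (I2_cases v') => ->; [by exists x | by exists v].
- by move=> j; rewrite /= /lf2 /pi inE.
- move=> v' a b; case: (I2_cases v') => ->.
  + have H : forall z, pi z = t0 -> connect [rel s t | [&& @sadj n G s t, pi s == t0 & pi t == t0]] x z.
      move=> z hz; have hzS : z \in S by move: hz; rewrite /pi; case: (z \in S).
      move: (hzS); rewrite inE => hz'.
      have := connect_restr (P := fun w => pi w == t0) hz'.
      have P : forall w, connect (avoidr (@sadj n G) v) x w -> pi w == t0.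
        by move=> w hw; rewrite /pi inE hw.
      move/(_ P); apply: connect_subrel => s t /and3P [/and3P [h _ _] hp hq].
      by rewrite /= h hp hq.
    have Rsym : symmetric [rel s t | [&& @sadj n G s t, pi s == t0 & pi t == t0]].
      by move=> s t; rewrite /= adj_sym; case: (pi s == t0); case: (pi t == t0); rewrite ?andbF.
    move=> ha hb; apply: connect_trans (H b hb); rewrite (sym_connect_sym Rsym); exact: H.
  + have H : forall z, pi z = t1 -> connect [rel s t | [&& @sadj n G s t, pi s == t1 & pi t == t1]] z v.
      move=> z hz; have hzS : z \notin S by move: hz; rewrite /pi; case: (z \in S).
      move: (@sconn n G z v) => /connectP [p pth hl].
      elim: p z pth hl hzS {hz} => [|c p IH] z /=; first by move=> _ -> _; exact: connect0.
      case/andP => hzc pth hl hzS.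
      case: (eqVneq z v) => [->|hzv]; first exact: connect0.
      have hcS : c \notin S by apply: contra hzS => hc; apply: Ssub hzc hc hzv.
      apply: connect_trans (IH c pth hl hcS); apply: connect1.
      by rewrite /= hzc /pi (negbTE hzS) (negbTE hcS).
    have Rsym : symmetric [rel s t | [&& @sadj n G s t, pi s == t1 & pi t == t1]].
      by move=> s t; rewrite /= adj_sym; case: (pi s == t1); case: (pi t == t1); rewrite ?andbF.
    move=> ha hb; apply: connect_trans (H a ha) _; rewrite (sym_connect_sym Rsym); exact: H.
- move=> a b; split; last by case.
  move=> hab; split => //.
  case: (I2_cases a) => ea; case: (I2_cases b) => eb; rewrite ea eb in hab *.
  + by move: hab; rewrite /= adj2_irr.
  + by exists x, v.
  + by exists v, x.
  + by move: hab; rewrite /= adj2_irr.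
Qed.

Lemma inCZ_ZF n (F : {set {set 'I_n}}) C : inCZ (ZF F) C -> exists2 A, A \in F & A \subset ~: C.
Proof.
case=> G [_ [w [/ZFP [A hA hs] ->]]]; exists A => //.
have [hs1 _] := sepP hs.
by apply/subsetP => j hj; rewrite !inE (negbTE (hs1 j hj)).
Qed.

Lemma ZF_inCZ n (F : {set {set 'I_n}}) A (hA : A \in F) (h1 : 2 <= #|A|) (h2 : 2 <= #|~: A|) :
  inCZ (ZF F) (~: A).
Proof.
exists (mkT2 h1 h2); split => //; exists t1; split; last first.
  by rewrite /ell -ell2_1.
apply/ZFP; exists A => //.
have e : forall j, j \in A -> @sleaf n (mkT2 h1 h2) j = t0 by move=> j hj; rewrite /= /lf2 hj.
apply: sepI; first by move=> j hj; rewrite e.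
by move=> j k hj hk; rewrite !e //; exact: connect0.
Qed.

Lemma compl_size n (A : {set 'I_n}) : 2 <= #|A| -> #|A| <= n - 2 -> 2 <= #|~: A|.
Proof. by move=> h0 h; have := cardsC A; rewrite card_ord => e; lia. Qed.

Lemma hyp_ZF n (F : {set {set 'I_n}}) : simple_intersecting F ->
  forall A, hyp (ZF F) A <-> A \in F.
Proof.
case=> hsz hanti hint A; split.
  case=> B [[hinB hmax] ->].
  have [A' hA' hsub] := inCZ_ZF hinB.
  have [s1 s2] := andP (hsz A' hA').
  have := hmax _ (ZF_inCZ hA' s1 (compl_size s1 s2)); rewrite subsetC => /(_ hsub) e.
  by rewrite -e setCK.
move=> hA; have [s1 s2] := andP (hsz A hA).
exists (~: A); split; last by rewrite setCK.
split; first exact: ZF_inCZ hA s1 (compl_size s1 s2).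
move=> C hC hsub.
have [A'' hA'' hs''] := inCZ_ZF hC.
have hCA : ~: C \subset A by rewrite -setCS setCK.
have eA : A'' = A by apply: hanti => //; apply: subset_trans hs'' hCA.
apply: (@setC_inj _); rewrite setCK; apply/eqP; rewrite eqEsubset hCA -eA hs''.
done.
Qed.

Definition o0 : 'I_3 := @Ordinal 3 0 isT.
Definition o1 : 'I_3 := @Ordinal 3 1 isT.
Definition o2 : 'I_3 := @Ordinal 3 2 isT.

Lemma I3_cases (a : 'I_3) : [\/ a = o0, a = o1 | a = o2].
Proof.
case: a => [[|[|[|m]]] h]; [apply: Or31|apply: Or32|apply: Or33|by []]; exact: val_inj.
Qed.

Definition adj3 : rel 'I_3 := fun a b => ((a : nat) + b == 1) || ((a : nat) + b == 3).

Lemma adj3_sym : symmetric adj3. Proof. by move=> a b; rewrite /adj3 /= addnC. Qed.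
Lemma adj3_irr : irreflexive adj3.
Proof. by move=> a; case: (I3_cases a) => ->. Qed.

Lemma adj3_o1 a : a != o1 -> adj3 a o1.
Proof. by case: (I3_cases a) => ->. Qed.

Lemma adj3_conn : forall x y : 'I_3, connect adj3 x y.
Proof.
have H : forall a, connect adj3 a o1.
  by move=> a; case: (eqVneq a o1) => [->|h]; [exact: connect0 | exact/connect1/adj3_o1].
move=> x y; apply: connect_trans (H x) _; rewrite (sym_connect_sym adj3_sym); exact: H.
Qed.

Lemma adj3_bridge : forall x y : 'I_3, adj3 x y ->
   ~~ connect (fun a b => [&& adj3 a b, (a, b) != (x, y) & (a, b) != (y, x)]) x y.
Proof.
move=> x y hxy; apply/negP => hc.
set e := (fun a b => _) in hc.
pose q := if (x : nat) == 1 then y else x.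
have hq : forall a b, e a b -> (a != q) && (b != q).
  move=> a b; rewrite /e /q /= !xpair_eqE; move: hxy.
  by case: (I3_cases a) => ->; case: (I3_cases b) => ->; case: (I3_cases x) => ->;
    case: (I3_cases y) => ->.
have hxy' : x != y by apply: contraTneq hxy => ->; rewrite adj3_irr.
have : (x == q) || (y == q).
  by rewrite /q; case: ((x : nat) == 1); rewrite eqxx ?orbT.
case/orP => /eqP hq'.
  have H : forall a b, e a b -> pred1 q a -> pred1 q b.
    by move=> a b /hq /andP [h _] /= ha; rewrite ha in h.
  have := connect_inv H hc; rewrite /= hq' eqxx => /(_ isT) /eqP hyq.
  by rewrite hyq hq' eqxx in hxy'.
have H : forall a b, e a b -> (a != q) -> (b != q).
  by move=> a b /hq /andP [_ h].
have hxq : x != q by rewrite -hq'.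
by move: (connect_inv H hc hxq); rewrite hq' eqxx.
Qed.

Section MkT3.
Variable n : nat.
Variable s : 'I_n -> 'I_3.
Hypothesis h0 : 2 <= #|[set i | s i == o0]|.
Hypothesis h1 : 1 <= #|[set i | s i == o1]|.
Hypothesis h2 : 2 <= #|[set i | s i == o2]|.

Lemma deg3 : forall v : 'I_3, 3 <= #|[set w | adj3 v w]| + #|[set i | s i == v]|.
Proof.
move=> v; case: (I3_cases v) => ->.
- have -> : [set w | adj3 o0 w] = [set o1].
    by apply/setP => w; rewrite !inE; case: (I3_cases w) => ->.
  by rewrite cards1.
- have -> : [set w | adj3 o1 w] = [set o0; o2].
    by apply/setP => w; rewrite !inE; case: (I3_cases w) => ->.
  by rewrite cards2.
- have -> : [set w | adj3 o2 w] = [set o1].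
    by apply/setP => w; rewrite !inE; case: (I3_cases w) => ->.
  by rewrite cards1.
Qed.

Definition mkT3 : stree n :=
  @STree n 3 adj3 s adj3_sym adj3_irr adj3_conn adj3_bridge deg3.

Lemma contr3 (B : {set 'I_n}) (hB : 2 <= #|B|) (hcB : 2 <= #|~: B|) (p : 'I_3 -> 'I_2)
  (hp0 : p o0 = t0) (hp2 : p o2 = t1) (hleaf : forall i, lf2 B i = p (s i)) :
  @contracts n mkT3 (mkT2 hB hcB) p.
Proof.
split.
- by move=> v'; case: (I2_cases v') => ->; [exists o0 | exists o2].
- exact: hleaf.
- move=> v' a b ha hb; case: (eqVneq a b) => [->|hab]; first exact: connect0.
  apply: connect1; rewrite /= ha hb eqxx !andbT.
  have : p a = p b by rewrite ha hb.
  move: hab; case: (I3_cases a) => ->; case: (I3_cases b) => ->; rewrite ?hp0 ?hp2 //.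
- move=> a b; split; last by case.
  move=> hab; split => //.
  case: (I2_cases a) => ea; case: (I2_cases b) => eb; rewrite ea eb in hab *.
  + by move: hab; rewrite /= adj2_irr.
  + case: (I2_cases (p o1)) => e1; [by exists o1, o2 | by exists o0, o1].
  + case: (I2_cases (p o1)) => e1; [by exists o2, o1 | by exists o1, o0].
  + by move: hab; rewrite /= adj2_irr.
Qed.
End MkT3.

Section Two.
Variable n : nat.
Variable G : stree n.
Hypothesis h2 : nv G = 2.
Local Notation V := ('I_(nv G)).
Local Notation adj := (@sadj n G).

Lemma cardV : #|V| = 2.
Proof. by rewrite card_ord. Qed.

Lemma two_elem (a b c : V) : a != b -> c != a -> c = b.
Proof.
move=> hab hca; apply/eqP; apply: contraT => hcb.
have : #|c |: [set a; b]| <= #|V| by apply: max_card.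
rewrite cardsU1 cards2 hab cardV !inE negb_or hca hcb.
by [].
Qed.

Lemma other (a : V) : exists b : V, b != a.
Proof.
have : 0 < #|[set~ a]| by rewrite cardsC1 cardV.
by case/card_gt0P => b; rewrite !inE; exists b.
Qed.

Lemma F1 (x y : V) : x != y -> adj x y.
Proof.
move=> hxy; have hyx : y != x by rewrite eq_sym.
have [u [hu _]] := first_step (e:=adj) (adj:=adj) (fun a b h => h) (@sconn n G x y) hyx.
have hux : u != x by rewrite eq_sym adj_neq.
by rewrite -(two_elem hxy hux).
Qed.

Lemma F3 (x : V) : 2 <= #|ell x|.
Proof.
have := @sdeg n G x.
have : #|[set w | adj x w]| <= 1.
  have <- : #|[set~ x]| = 1 by rewrite cardsC1 cardV.
  apply: subset_leq_card; apply/subsetP => w; rewrite !inE => h.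
  by rewrite eq_sym adj_neq.
move=> h1 h3; have := leq_trans h3 (leq_add h1 (leqnn _)).
by rewrite add1n ltnS.
Qed.

Lemma F2 (x y : V) : x != y -> ell y = ~: ell x.
Proof.
move=> hxy; apply/setP => i; rewrite !inE.
case: (eqVneq (@sleaf n G i) x) => [->|h]; first by rewrite (negbTE hxy).
by rewrite (two_elem hxy h) eqxx.
Qed.
End Two.

Lemma CZ_mem n (Z : assignment n) (hext : extremal Z) (G : stree n) (h2 : nv G = 2)
  (x : 'I_(nv G)) : inCZ Z (ell x) -> x \in Z G.
Proof.
case=> G2 [h22 [w [hw e]]].
have [w' hw'] := other h22 w.
have hww : w != w' by rewrite eq_sym.
have [x' hx'] := other h2 x.
pose pi := fun z : 'I_(nv G) => if z == x then w else w'.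
have surj : forall v', exists v, pi v = v'.
  move=> v'; case: (eqVneq v' w) => [->|ne]; first by exists x; rewrite /pi eqxx.
  by exists x'; rewrite /pi (negbTE hx') (two_elem h22 hww ne).
have inj : forall a b, pi a = pi b -> a = b.
  move=> a b; rewrite /pi; case: (eqVneq a x) => [->|ha]; case: (eqVneq b x) => [->|hb];
    rewrite ?eqxx ?(negbTE ha) ?(negbTE hb) //.
  - by move=> h; rewrite h eqxx in hw'.
  - by move=> h; rewrite h eqxx in hw'.
  - move=> _; have hxa : x != a by rewrite eq_sym.
    by rewrite (two_elem h2 hxa hb).
have hc : contracts pi.
  split => //.
  - move=> i; rewrite /pi; case: (eqVneq (@sleaf n G i) x) => h.
      have : i \in ell x by rewrite inE h.
      by rewrite e inE => /eqP.
    have : i \notin ell x by rewrite inE h.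
    by rewrite e inE => hi; rewrite (two_elem h22 hww hi).
  - by move=> v' a b ha hb; rewrite (inj a b) ?ha ?hb //; exact: connect0.
  - move=> a b; split.
      move=> hab; split; first exact: adj_neq.
      have [a0 ha0] := surj a; have [b0 hb0] := surj b.
      exists a0, b0; split => //; apply: F1 => //.
      apply: (contraTneq _ (adj_neq hab)) => hh; by rewrite -ha0 -hb0 hh eqxx.
    by case=> hab _; apply: F1.
have hpx : pi x = w by rewrite /pi eqxx.
exact: ((hext.2 G G2 pi hc w).1 hw x hpx).
Qed.

Lemma CZ_sizes n (Z : assignment n) (B : {set 'I_n}) : inCZ Z B -> 2 <= #|B| /\ 2 <= #|~: B|.
Proof.
case=> G [h2 [w [_ ->]]]; split; first exact: F3.
have [w' hw'] := other h2 w.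
rewrite -(F2 h2 (_ : w != w')); first exact: F3.
by rewrite eq_sym.
Qed.

Lemma ell_T2_0 n (B : {set 'I_n}) (h1 : 2 <= #|B|) (h2 : 2 <= #|~: B|) :
  ell (t0 : 'I_(nv (mkT2 h1 h2))) = B.
Proof. exact: ell2_0. Qed.

Lemma DOWN n (Z : assignment n) (hext : extremal Z) (B B' : {set 'I_n}) :
  inCZ Z B -> B' \subset B -> 2 <= #|B'| -> inCZ Z B'.
Proof.
move=> hB hsub hB'; case: (eqVneq B' B) => [->//|ne].
have [s1 s2] := CZ_sizes hB.
have s3 : 2 <= #|~: B'|.
  by apply: leq_trans s2 _; apply: subset_leq_card; rewrite setCS.
have [k hkB hkB'] : exists2 k, k \in B & k \notin B'.
  have : B' \proper B by rewrite properEneq ne hsub.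
  by case/properP => _ [k h1 h2]; exists k.
pose s := fun i => if i \in B' then o0 else if i \in B then o1 else o2.
have e0 : [set i | s i == o0] = B'.
  by apply/setP => i; rewrite !inE /s; case: (i \in B'); case: (i \in B).
have e2 : [set i | s i == o2] = ~: B.
  apply/setP => i; rewrite !inE /s; case: (boolP (i \in B')) => hi.
    by rewrite (subsetP hsub _ hi).
  by case: (i \in B).
have h0 : 2 <= #|[set i | s i == o0]| by rewrite e0.
have h2 : 2 <= #|[set i | s i == o2]| by rewrite e2.
have h1 : 1 <= #|[set i | s i == o1]|.
  by apply/card_gt0P; exists k; rewrite inE /s (negbTE hkB') hkB.
pose p1 := fun z : 'I_3 => if z == o2 then t1 else t0.
pose p2 := fun z : 'I_3 => if z == o0 then t0 else t1.
have hc1 : @contracts n (mkT3 h0 h1 h2) (mkT2 s1 s2) p1.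
  apply: contr3 => // i; rewrite /lf2 /p1 /s; case: (boolP (i \in B')) => hi.
    by rewrite (subsetP hsub _ hi).
  by case: (i \in B).
have hc2 : @contracts n (mkT3 h0 h1 h2) (mkT2 hB' s3) p2.
  apply: contr3 => // i; rewrite /lf2 /p2 /s; case: (boolP (i \in B')) => hi //.
  by case: (i \in B).
have hz : (t0 : 'I_(nv (mkT2 s1 s2))) \in Z (mkT2 s1 s2).
  by apply: CZ_mem => //; rewrite ell_T2_0.
have ho0 : (o0 : 'I_(nv (mkT3 h0 h1 h2))) \in Z (mkT3 h0 h1 h2).
  exact: ((hext.2 (mkT3 h0 h1 h2) (mkT2 s1 s2) p1 hc1 t0).1 hz o0 erefl).
have hz2 : (t0 : 'I_(nv (mkT2 hB' s3))) \in Z (mkT2 hB' s3).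
  apply: ((hext.2 (mkT3 h0 h1 h2) (mkT2 hB' s3) p2 hc2 t0).2) => v hv.
  have -> : v = o0 by move: hv; rewrite /p2; case: (eqVneq v o0).
  exact: ho0.
by exists (mkT2 hB' s3); split => //; exists t0; split => //; rewrite ell_T2_0.
Qed.

Lemma COMP n (Z : assignment n) (hext : extremal Z) (B : {set 'I_n}) :
  inCZ Z B -> inCZ Z (~: B) -> False.
Proof.
case=> G [h2 [w [hw e]]] hc.
have [w' hw'] := other h2 w.
have hww : w != w' by rewrite eq_sym.
have hz' : w' \in Z G by apply: CZ_mem => //; rewrite (F2 h2 hww) -e.
apply: (negP (hext.1 G)); rewrite eqEsubset subsetT /=.
apply/subsetP => v _; case: (eqVneq v w) => [->//|hv].
by rewrite (two_elem h2 hww hv).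
Qed.

Lemma max_above n (Z : assignment n) (B : {set 'I_n}) :
  inCZ Z B -> exists B', maxCZ Z B' /\ B \subset B'.
Proof.
suff H : forall k (B : {set 'I_n}), #|~: B| <= k -> inCZ Z B -> exists B', maxCZ Z B' /\ B \subset B'.
  exact: H _ B (leqnn _).
elim=> [|k IH] {}B hk hB.
  exists B; split => //; split => // C hC hBC.
  move: hk; rewrite leqn0 cards_eq0 => /eqP h.
  have eB : B = setT by apply: setC_inj; rewrite h setCT.
  by rewrite eB in hBC *; apply/eqP; rewrite eqEsubset subsetT hBC.
case: (classic (forall C, inCZ Z C -> B \subset C -> C = B)) => [H|H].
  by exists B; split.
have [C [hC hBC hCB]] : exists C, [/\ inCZ Z C, B \subset C & C <> B].
  apply: NNPP => HH; apply: H => C hC hBC; apply: NNPP => hne; apply: HH; by exists C.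
have hpr : ~: C \proper ~: B.
  rewrite properEneq setCS hBC andbT; apply/negP => /eqP /setC_inj; exact: hCB.
have := proper_card hpr => hlt.
have hk' : #|~: C| <= k by rewrite -ltnS; apply: leq_trans hlt hk.
have [B' [hm hs]] := IH C hk' hC.
by exists B'; split => //; apply: subset_trans hBC hs.
Qed.

Definition pb (P : Prop) : bool := if excluded_middle_informative P then true else false.
Lemma pbP (P : Prop) : pb P <-> P.
Proof. by rewrite /pb; case: (excluded_middle_informative P). Qed.

Lemma part1 n (Z : assignment n) : extremal Z -> smooth Z ->
  exists F : {set {set 'I_n}}, (forall A, A \in F <-> hyp Z A) /\ simple_intersecting F.
Proof.
move=> hext _.
exists [set A | pb (hyp Z A)]; split.
  by move=> A; rewrite inE pbP.
split.
- move=> A; rewrite inE pbP => [[B [[hB _] ->]]].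
  have [s1 s2] := CZ_sizes hB.
  have := cardsC B; rewrite card_ord => e.
  apply/andP; split => //; lia.
- move=> A1 A2; rewrite !inE !pbP => [[B1 [[hB1 hm1] ->]]] [[B2 [[hB2 hm2] ->]]] hs.
  by rewrite (hm2 B1 hB1) // -setCS.
- move=> A1 A2; rewrite !inE !pbP => [[B1 [[hB1 hm1] ->]]] [[B2 [[hB2 hm2] ->]]].
  apply/negP; rewrite setI_eq0 disjoints_subset setCK => hs.
  have [s1 s2] := CZ_sizes hB1.
  exact: (COMP hext hB1 (DOWN hext hB2 hs s2)).
Qed.

Lemma CZ_transfer n (Z1 Z2 : assignment n) : extremal Z2 ->
  (forall A, hyp Z1 A -> hyp Z2 A) -> forall B, inCZ Z1 B -> inCZ Z2 B.
Proof.
move=> hext2 hh B hB.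
have [B' [hm hs]] := max_above hB.
have [B2 [[hB2 _] e]] := hh (~: B') (ex_intro _ B' (conj hm erefl)).
have eB : B2 = B' by apply: setC_inj.
rewrite eB in hB2.
have [s1 _] := CZ_sizes hB.
exact: (DOWN hext2 hB2 hs s1).
Qed.

Lemma Z_transfer n (Z1 Z2 : assignment n) : smooth Z1 -> extremal Z2 ->
  (forall A, hyp Z1 A -> hyp Z2 A) -> forall G v, v \in Z1 G -> v \in Z2 G.
Proof.
move=> hs1 hext2 hh G v hv.
have [G' [pi [h2 hc hpv]]] := hs1 G v hv.
have hin : inCZ Z1 (ell (pi v)) by exists G'; split => //; exists (pi v).
have := CZ_mem hext2 h2 (CZ_transfer hext2 hh hin) => hz.
exact: ((hext2.2 G G' pi hc (pi v)).1 hz v erefl).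
Qed.

Theorem theorem7p9 (n : nat) (Hn : 3 <= n) :
  [/\ (* well defined: the image is a simple intersecting family *)
      (forall Z : assignment n, extremal Z -> smooth Z ->
         exists F : {set {set 'I_n}},
           (forall A, A \in F <-> hyp Z A) /\ simple_intersecting F),
      (* injective *)
      (forall Z1 Z2 : assignment n, extremal Z1 -> smooth Z1 ->
         extremal Z2 -> smooth Z2 ->
         (forall A, hyp Z1 A <-> hyp Z2 A) -> forall G, Z1 G = Z2 G) &
      (* surjective *)
      (forall F : {set {set 'I_n}}, simple_intersecting F ->
         exists Z : assignment n,
           [/\ extremal Z, smooth Z & forall A, hyp Z A <-> A \in F])].
Proof.
split.
- exact: part1.
- move=> Z1 Z2 he1 hs1 he2 hs2 hh G; apply/setP => v; apply/idP/idP.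
    by apply: Z_transfer => // A /hh.
  by apply: Z_transfer => // A /hh.
- move=> F hF; exists (ZF F); split.
  + case: hF => _ _ hI; apply: ZF_ext => //; lia.
  + by case: hF => hsz _ _; apply: ZF_smooth => A /hsz /andP [].
  + exact: hyp_ZF.
Qed.
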